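(* Let $\Sigma_{\tau_d}=(\mathbb{R}^n,P,\mathcal P,F)$ be a switched system with $\mathcal P=\mathcal S_{\tau_d}(\mathbb{R}^+_0,P)$, let $\tau_s,\eta,\varepsilon>0$ with $\tau_d=N\tau_s$ for a positive integer $N$. Assume that for every $p\in P$ there is a $\delta$-GAS Lyapunov function $V_p$ for $\Sigma_p$, that there exists $\mu\ge1$ with $V_p(x,y)\le\mu V_{p'}(x,y)$ for all $x,y\in\mathbb{R}^n$ and $p,p'\in P$, and that for every $p$ there is a $\mathcal K_\infty$ function $\gamma_p$ with $|V_p(x,y)-V_p(x,z)|\le\gamma_p(\|y-z\|)$ for all $x,y,z\in\mathbb{R}^n$; let $\gamma=\max_p\gamma_p$. If $\tau_d>\frac{\log\mu}{\kappa}$ and $$\eta\le\min\Big\{\gamma^{-1}\Big(\frac{\frac1\mu-e^{-\kappa\tau_d}}{1-e^{-\kappa\tau_d}}(1-e^{-\kappa\tau_s})\underline\alpha(\varepsilon)\Big),\ \overline\alpha^{-1}\big(\underline\alpha(\varepsilon)\big)\Big\},$$ then $T_{\tau_s}(\Sigma_{\tau_d})\sim_\varepsilon T_{\tau_s,\eta}(\Sigma_{\tau_d})$.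
   Context: A switched system is $\Sigma=(\mathbb{R}^n,P,\mathcal P,F)$ where $P=\{1,\dots,m\}$; $\mathcal S(\mathbb{R}^+_0,P)$ is the set of piecewise constant, right-continuous functions $\mathbb{R}^+_0\to P$ with finitely many discontinuities (switching times) on every bounded interval; $\mathcal S_{\tau_d}(\mathbb{R}^+_0,P)$ is the subset of signals whose switching times $t_1<t_2<\cdots$ satisfy $t_1\ge\tau_d$ and $t_i-t_{i-1}\ge\tau_d$ for $i\ge2$. $F=\{f_1,\dots,f_m\}$ with each $f_p$ locally Lipschitz and all solutions of $\dot x=f_p(x)$ defined for all $t\ge0$. Subsystem $\Sigma_p$: $\dot x=f_p(x)$; $\mathbf x(t,x,p)$ is its solution at time $t$ from $x$. A smooth $V_p:\mathbb{R}^n\times\mathbb{R}^n\to\mathbb{R}^+_0$ is a $\delta$-GAS Lyapunov function for $\Sigma_p$ if there exist $\mathcal K_\infty$ functions $\underline\alpha_p,\overline\alpha_p$ and $\kappa_p>0$ with $\underline\alpha_p(\|x-y\|)\le V_p(x,y)\le\overline\alpha_p(\|x-y\|)$ and $\frac{\partial V_p}{\partial x}(x,y)f_p(x)+\frac{\partial V_p}{\partial y}(x,y)f_p(y)\le-\kappa_p V_p(x,y)$ for all $x,y$ ($\mathcal K_\infty$: continuous, strictly increasing, unbounded, zero at zero). Set $\underline\alpha=\min_p\underline\alpha_p$, $\overline\alpha=\max_p\overline\alpha_p$, $\kappa=\min_p\kappa_p$. A transition system is $T=(Q,L,\to,O,H,I)$: states, labels, transition relation $\to\subseteq Q\times L\times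 Q$ (written $q\xrightarrow{l}q'$), outputs, output map $H:Q\to O$, initial states $I\subseteq Q$; metric if $O$ has a metric $d$. For metric $T_1,T_2$ with common $L,O$ and $\varepsilon\ge0$, $R\subseteq Q_1\times Q_2$ is an $\varepsilon$-approximate bisimulation relation if for all $(q_1,q_2)\in R$: $d(H_1(q_1),H_2(q_2))\le\varepsilon$; every $q_1\xrightarrow{l}_1q_1'$ is matched by some $q_2\xrightarrow{l}_2q_2'$ with $(q_1',q_2')\in R$; and symmetrically. $T_1\sim_\varepsilon T_2$ if such $R$ exists with every initial state of $T_1$ related to some initial state of $T_2$ and vice versa. $T_{\tau_s}(\Sigma_{\tau_d})$: states $\mathbb{R}^n\times P\times\{0,\dots,N-1\}$; labels $P$; $(x,p,i)\xrightarrow{l}(x',p',i')$ iff $l=p$, $x'=\mathbf x(\tau_s,x,p)$ and one of: (a) $i<N-1$, $p'=p$, $i'=i+1$; (b) $i=N-1$, $p'=p$, $i'=N-1$; (c) $i=N-1$, $p'\neq p$, $i'=0$. Outputs $\mathbb{R}^n$, $H((x,p,i))=x$, initial states $\mathbb{R}^n\times P\times\{0\}$. Lattice $[\mathbb{R}^n]_\eta=\{q\in\mathbb{R}^n: q_i=k_i\frac{2\eta}{\sqrt n},\ k_i\in\mathbb Z\}$. $T_{\tau_s,\eta}(\Sigma_{\tau_d})$: states $[\mathbb{R}^n]_\eta\times P\times\{0,\dots,N-1\}$; labels $P$; $(q,p,i)\xrightarrow{l}(q',p',i')$ iff $l=p$, $\|\mathbf x(\tau_s,q,p)-q'\|\le\eta$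 and one of (a),(b),(c) above holds; outputs $\mathbb{R}^n$, $H((q,p,i))=q$; initial states $[\mathbb{R}^n]_\eta\times P\times\{0\}$. Both use the Euclidean metric on $\mathbb{R}^n$. *)

(* Defs.v *)
From mathcomp Require Import all_boot.
From Stdlib Require Import Reals ClassicalEpsilon.
Set Implicit Arguments. Unset Strict Implicit. Unset Printing Implicit Defensive.
Open Scope R_scope.

Definition vec (n : nat) := 'I_n -> R.

Definition vsub n (x y : vec n) : vec n := fun i => x i - y i.

Definition enorm n (x : vec n) : R := sqrt (\big[Rplus/0]_(i < n) (x i * x i)).
Definition edist n (x y : vec n) : R := enorm (vsub x y).

(* finite min / max over a nonempty finite type (0 if empty, never used then) *)
Definition fmin (T : finType) (g : T -> R) : R :=
  match enum T with [::] => 0 | p0 :: _ => \big[Rmin/g p0]_(p : T) g p end.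
Definition fmax (T : finType) (g : T -> R) : R :=
  match enum T with [::] => 0 | p0 :: _ => \big[Rmax/g p0]_(p : T) g p end.

(* K_infinity functions on R^+_0 (given as functions R -> R, only values on
   [0,oo) matter): continuous, strictly increasing, unbounded, zero at zero. *)
Definition Kinf (a : R -> R) : Prop :=
  a 0 = 0 /\
  (forall r, 0 <= r -> forall e, 0 < e -> exists d, 0 < d /\
      forall s, 0 <= s -> Rabs (s - r) < d -> Rabs (a s - a r) < e) /\
  (forall r s, 0 <= r -> r < s -> a r < a s) /\
  (forall M, exists r, 0 <= r /\ M < a r).

Definition Kinv (a : R -> R) (y : R) : R :=
  epsilon (inhabits 0) (fun r => 0 <= r /\ a r = y).

Definition upd (I : eqType) (z : I -> R) (j : I) (t : R) : I -> R :=
  fun i => if i == j then z i + t else z i.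

Definition partial_lim (I : eqType) (F : (I -> R) -> R) (j : I) (z : I -> R)
  (l : R) : Prop := derivable_pt_lim (fun t => F (upd z j t)) 0 l.

Definition contF (I : Type) (F : (I -> R) -> R) : Prop :=
  forall z e, 0 < e -> exists d, 0 < d /\
    forall w, (forall i, Rabs (w i - z i) < d) -> Rabs (F w - F z) < e.

(* C^infinity: all iterated partial derivatives exist and are continuous;
   D js is the iterated partial derivative along the list of coordinates js. *)
Definition smooth (I : finType) (F : (I -> R) -> R) : Prop :=
  exists D : seq I -> (I -> R) -> R,
    D [::] = F /\ (forall js, contF (D js)) /\
    (forall js j z, partial_lim (D js) j z (D (j :: js) z)).

(* V : R^n x R^n -> R seen as a function of 2n real variables *)
Definition Vcat n (V : vec n -> vec n -> R) : ('I_n + 'I_n -> R) -> R :=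
  fun z => V (fun i => z (inl i)) (fun i => z (inr i)).

Definition dGAS_Lyapunov n (f : vec n -> vec n) (V : vec n -> vec n -> R)
  (alo ahi : R -> R) (kap : R) : Prop :=
  smooth (Vcat V) /\ (forall x y, 0 <= V x y) /\
  Kinf alo /\ Kinf ahi /\ 0 < kap /\
  (forall x y, alo (edist x y) <= V x y /\ V x y <= ahi (edist x y)) /\
  (forall x y, exists dVx dVy : vec n,
     (forall i, derivable_pt_lim (fun t => V (upd x i t) y) 0 (dVx i)) /\
     (forall i, derivable_pt_lim (fun t => V x (upd y i t)) 0 (dVy i)) /\
     \big[Rplus/0]_(i < n) (dVx i * f x i) + \big[Rplus/0]_(i < n) (dVy i * f y i)
       <= - kap * V x y).

Definition locally_lipschitz n (f : vec n -> vec n) : Prop :=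
  forall x, exists r L, 0 < r /\ forall y z, edist y x < r -> edist z x < r ->
    edist (f y) (f z) <= L * edist y z.

Definition is_solution n (f : vec n -> vec n) (x0 : vec n) (phi : R -> vec n) : Prop :=
  phi 0 = x0 /\
  (forall i e, 0 < e -> exists d, 0 < d /\
      forall s, 0 <= s -> s < d -> Rabs (phi s i - phi 0 i) < e) /\
  (forall t, 0 < t -> forall i, derivable_pt_lim (fun s => phi s i) t (f (phi t) i)).

Record TS (L O : Type) := mkTS {
  TQ : Type;
  Ttrans : TQ -> L -> TQ -> Prop;
  TH : TQ -> O;
  TI : TQ -> Prop }.

Definition approx_bisim_rel (L O : Type) (d : O -> O -> R) (T1 T2 : TS L O)
  (eps : R) (Rel : TQ T1 -> TQ T2 -> Prop) : Prop :=
  forall q1 q2, Rel q1 q2 ->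
    d (TH q1) (TH q2) <= eps /\
    (forall l q1', Ttrans q1 l q1' -> exists q2', Ttrans q2 l q2' /\ Rel q1' q2') /\
    (forall l q2', Ttrans q2 l q2' -> exists q1', Ttrans q1 l q1' /\ Rel q1' q2').

Definition approx_bisimilar (L O : Type) (d : O -> O -> R) (T1 T2 : TS L O)
  (eps : R) : Prop :=
  exists Rel : TQ T1 -> TQ T2 -> Prop, @approx_bisim_rel L O d T1 T2 eps Rel /\
    (forall q1, TI q1 -> exists q2, TI q2 /\ Rel q1 q2) /\
    (forall q2, TI q2 -> exists q1, TI q1 /\ Rel q1 q2).

Definition mode_step m N (p : 'I_m) (i : 'I_N) (p' : 'I_m) (i' : 'I_N) : Prop :=
  ((nat_of_ord i < N - 1)%nat /\ p' = p /\ nat_of_ord i' = (nat_of_ord i + 1)%nat) \/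
  (nat_of_ord i = (N - 1)%nat /\ p' = p /\ nat_of_ord i' = (N - 1)%nat) \/
  (nat_of_ord i = (N - 1)%nat /\ p' <> p /\ nat_of_ord i' = 0%nat).

(* T_{tau_s}(Sigma_{tau_d}); xflow p t x is the solution x(t,x,p) *)
Definition T_exact n m N (xflow : 'I_m -> R -> vec n -> vec n) (tau_s : R)
  : TS 'I_m (vec n) :=
  {| TQ := (vec n * 'I_m * 'I_N)%type;
     Ttrans := fun q l q' =>
       l = q.1.2 /\ q'.1.1 = xflow q.1.2 tau_s q.1.1 /\ mode_step q.1.2 q.2 q'.1.2 q'.2;
     TH := fun q => q.1.1;
     TI := fun q => nat_of_ord q.2 = 0%nat |}.

Definition in_lattice n (eta : R) (q : vec n) : Prop :=
  forall i, exists k : Z, q i = IZR k * (2 * eta / sqrt (INR n)).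

Definition T_abs n m N (xflow : 'I_m -> R -> vec n -> vec n) (tau_s eta : R)
  : TS 'I_m (vec n) :=
  {| TQ := ({q : vec n | in_lattice eta q} * 'I_m * 'I_N)%type;
     Ttrans := fun q l q' =>
       l = q.1.2 /\ edist (xflow q.1.2 tau_s (proj1_sig q.1.1)) (proj1_sig q'.1.1) <= eta /\
       mode_step q.1.2 q.2 q'.1.2 q'.2;
     TH := fun q => proj1_sig q.1.1;
     TI := fun q => nat_of_ord q.2 = 0%nat |}.

(* Main.v *)
From HB Require Import structures.
Require Import Defs.
From mathcomp Require Import all_boot.
From Stdlib Require Import Reals ClassicalEpsilon Lra FunctionalExtensionality.
Set Implicit Arguments. Unset Strict Implicit. Unset Printing Implicit Defensive.
Open Scope R_scope.

HB.instance Definition _ := Monoid.isComLaw.Build R 0 Rplus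
  (fun a b c => esym (Rplus_assoc a b c)) Rplus_comm Rplus_0_l.

Lemma sum_sumType (I J : finType) (F : I + J -> R) :
  \big[Rplus/0]_(k : I + J) F k =
  \big[Rplus/0]_(i : I) F (inl i) + \big[Rplus/0]_(j : J) F (inr j).
Proof. by rewrite big_sumType. Qed.

Lemma fin_delta_seq (I : eqType) (P : I -> R -> Prop) (l : seq I) :
  (forall i, exists d, 0 < d /\ P i d) ->
  (forall i d d', 0 < d' <= d -> P i d -> P i d') ->
  exists d, 0 < d /\ forall i, i \in l -> P i d.
Proof.
move=> H1 H2; elim: l => [|a l [d [Hd IH]]].
  by exists 1; split; [lra|].
have [d1 [Hd1 Pa]] := H1 a.
exists (Rmin d d1); split; first by apply Rmin_pos.
move=> i; rewrite in_cons => /orP [/eqP ->|Hi].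
  apply: H2 Pa; split; [by apply Rmin_pos| apply Rmin_r].
apply: H2 (IH _ Hi); split; [by apply Rmin_pos| apply Rmin_l].
Qed.

Lemma fin_delta (I : finType) (P : I -> R -> Prop) :
  (forall i, exists d, 0 < d /\ P i d) ->
  (forall i d d', 0 < d' <= d -> P i d -> P i d') ->
  exists d, 0 < d /\ forall i, P i d.
Proof.
move=> H1 H2; have [d [Hd H]] := @fin_delta_seq I P (enum I) H1 H2.
exists d; split => // i; apply: H; by rewrite mem_enum.
Qed.

Definition setc (I : eqType) (z : I -> R) (j : I) (u : R) : I -> R :=
  fun i => if i == j then u else z i.

Lemma shift_deriv f x l :
  derivable_pt_lim (fun s => f (x + s)) 0 l -> derivable_pt_lim f x l.
Proof.
move=> H eps Heps; have [d Hd] := H eps Heps; exists d => h h0 hd.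
have := Hd h h0 hd; by rewrite Rplus_0_l Rplus_0_r.
Qed.

Lemma partial_deriv1 (I : eqType) (F : (I -> R) -> R) (j : I) (w : I -> R) (u0 l : R) :
  partial_lim F j (setc w j u0) l ->
  derivable_pt_lim (fun u => F (setc w j u)) u0 l.
Proof.
move=> H; apply: shift_deriv.
have -> : (fun s => F (setc w j (u0 + s))) = (fun t => F (upd (setc w j u0) j t)).
  apply: functional_extensionality => t; congr F.
  apply: functional_extensionality => i; rewrite /upd /setc.
  by case: (i == j).
exact: H.
Qed.

Lemma deriv_cont g t l : derivable_pt_lim g t l ->
  forall e, 0 < e -> exists d, 0 < d /\ forall h, Rabs h < d -> Rabs (g (t + h) - g t) < e.
Proof.
move=> H e He; have [d1 Hd1] := H 1 Rlt_0_1.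
have Hl : 0 < Rabs l + 1 by have := Rabs_pos l; lra.
exists (Rmin d1 (e / (Rabs l + 1))); split.
  apply: Rmin_pos; [exact: (cond_pos d1)| apply: Rdiv_lt_0_compat => //].
move=> h Hh.
case: (Req_dec h 0) => [->|h0].
  by rewrite Rplus_0_r Rminus_diag Rabs_R0.
have Hh1 : Rabs h < d1 by have := Rmin_l d1 (e / (Rabs l + 1)); lra.
have Hh2 : Rabs h < e / (Rabs l + 1) by have := Rmin_r d1 (e / (Rabs l + 1)); lra.
have K := Hd1 h h0 Hh1.
have Q : Rabs ((g (t + h) - g t) / h) < Rabs l + 1.
  have := Rabs_triang_inv ((g (t + h) - g t) / h) l; lra.
have -> : g (t + h) - g t = ((g (t + h) - g t) / h) * h by field.
rewrite Rabs_mult.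
have hp : 0 < Rabs h by apply: Rabs_pos_lt.
have : Rabs h * (Rabs l + 1) < e.
  have := Rmult_lt_compat_r (Rabs l + 1) _ _ Hl Hh2.
  rewrite /Rdiv Rmult_assoc Rinv_l; lra.
move=> E; have := Rabs_pos ((g (t + h) - g t) / h); nra.
Qed.

Lemma incr (I : finType) (F : (I -> R) -> R) (D1 : (I -> R) -> R) (j : I) (z0 : I -> R)
  (Hp : forall z, partial_lim F j z (D1 z)) (Hc : contF D1) e (He : 0 < e) :
  exists d, 0 < d /\ forall w a b, (forall i, Rabs (w i - z0 i) < d) ->
    Rabs (a - z0 j) < d -> Rabs (b - z0 j) < d ->
    Rabs (F (setc w j b) - F (setc w j a) - (b - a) * D1 z0) <= e * Rabs (b - a).
Proof.
have [d [Hd Hcd]] := Hc z0 e He.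
exists d; split => // w a b Hw Ha Hb.
have mvt : forall a b, a < b -> exists c, a < c < b /\
    F (setc w j b) - F (setc w j a) = D1 (setc w j c) * (b - a).
  move=> a' b' Hab.
  have [c [E Hc']] := MVT_cor2 (fun u => F (setc w j u)) (fun u => D1 (setc w j u)) a' b' Hab
     (fun c _ => partial_deriv1 (Hp (setc w j c))).
  by exists c; split.
have close : forall c, Rmin a b <= c <= Rmax a b ->
    Rabs (D1 (setc w j c) - D1 z0) < e.
  move=> c Hc'; apply: Hcd => i; rewrite /setc; case: eqP => [->|_] //.
  move: Ha Hb Hc'; rewrite /Rmin /Rmax; case: Rle_dec => Hle;
  move=> /Rabs_def2 [? ?] /Rabs_def2 [? ?] [? ?]; apply: Rabs_def1; lra.
case: (Rtotal_order a b) => [Hab|[Hab|Hab]].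
- have [c [Hc' E]] := mvt a b Hab; rewrite E.
  have Hc2 : Rmin a b <= c <= Rmax a b.
    by rewrite /Rmin /Rmax; case: Rle_dec => Hle; lra.
  have C := close c Hc2.
  have -> : D1 (setc w j c) * (b - a) - (b - a) * D1 z0 = (D1 (setc w j c) - D1 z0) * (b - a) by ring.
  rewrite Rabs_mult; apply Rmult_le_compat_r; [apply Rabs_pos| lra].
- subst b; rewrite !Rminus_diag Rmult_0_l Rminus_diag Rabs_R0; lra.
- have [c [Hc' E]] := mvt b a Hab.
  have Hc2 : Rmin a b <= c <= Rmax a b.
    by rewrite /Rmin /Rmax; case: Rle_dec => Hle; lra.
  have C := close c Hc2.
  have -> : F (setc w j b) - F (setc w j a) - (b - a) * D1 z0 = (D1 (setc w j c) - D1 z0) * (a - b) * (-1).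
    rewrite -[F (setc w j b) - F (setc w j a)]Ropp_involutive Ropp_minus_distr E; ring.
  rewrite !Rabs_mult Rabs_Ropp Rabs_R1 Rmult_1_r (Rabs_minus_sym a b).
  apply Rmult_le_compat_r; [apply Rabs_pos| lra].
Qed.

Definition Psi (I : finType) (s : seq I) (Phi : R -> I -> R) (t h : R) : I -> R :=
  fun i => if i \in s then Phi (t + h) i else Phi t i.

Lemma coords_close (I : finType) (Phi : R -> I -> R) (t : R) (Phi' : I -> R)
  (Hd : forall i, derivable_pt_lim (fun s => Phi s i) t (Phi' i)) e (He : 0 < e) :
  exists d, 0 < d /\ forall h, Rabs h < d -> forall i, Rabs (Phi (t + h) i - Phi t i) < e.
Proof.
have [d [Hd0 H]] := @fin_delta I (fun i d => forall h, Rabs h < d -> Rabs (Phi (t + h) i - Phi t i) < e)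
  (fun i => deriv_cont (Hd i) He) (fun i d d' Hdd P h Hh => P h ltac:(lra)).
by exists d; split => // h Hh i; apply: H.
Qed.

Lemma chain_seq (I : finType) (F : (I -> R) -> R) (D1 : I -> (I -> R) -> R)
  (Hp : forall j z, partial_lim F j z (D1 j z)) (Hc : forall j, contF (D1 j))
  (Phi : R -> I -> R) (t : R) (Phi' : I -> R)
  (Hd : forall i, derivable_pt_lim (fun s => Phi s i) t (Phi' i)) (s : seq I) :
  uniq s -> forall eps, 0 < eps -> exists d, 0 < d /\ forall h, h <> 0 -> Rabs h < d ->
   Rabs ((F (Psi s Phi t h) - F (Phi t)) / h - \big[Rplus/0]_(i <- s) (D1 i (Phi t) * Phi' i)) < eps.
Proof.
elim: s => [|j s IH].
  move=> _ eps Heps; exists 1; split; first lra.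
  move=> h h0 _; rewrite big_nil.
  have -> : Psi [::] Phi t h = Phi t by apply: functional_extensionality => i; rewrite /Psi in_nil.
  by rewrite Rminus_diag /Rdiv Rmult_0_l Rminus_diag Rabs_R0.
rewrite cons_uniq => /andP [js us] eps Heps.
set z0 := Phi t; set Dz := D1 j z0; set P' := Phi' j.
have HDz : 0 < Rabs Dz + 1 by have := Rabs_pos Dz; lra.
have HP' : 0 < Rabs P' + 1 by have := Rabs_pos P'; lra.
have [d1 [Hd1 H1]] := IH us (eps / 2) ltac:(lra).
set r := Rmin 1 (eps / (4 * (Rabs Dz + 1))).
have Hr : 0 < r by apply: Rmin_pos; [lra| apply: Rdiv_lt_0_compat; lra].
have [d2 H2] := Hd j r Hr.
set e := eps / (4 * (Rabs P' + 1)).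
have He : 0 < e by apply: Rdiv_lt_0_compat; lra.
have [d3 [Hd3 H3]] := @incr I F (D1 j) j z0 (Hp j) (Hc j) e He.
have [d4 [Hd4 H4]] := coords_close Hd Hd3.
have Hd2 := cond_pos d2.
exists (Rmin d1 (Rmin d2 d4)); split.
  by apply: Rmin_pos => //; apply: Rmin_pos.
move=> h h0 Hh.
have Hh1 : Rabs h < d1 by have := Rmin_l d1 (Rmin d2 d4); lra.
have Hh2 : Rabs h < d2 by have := Rmin_l d2 d4; have := Rmin_r d1 (Rmin d2 d4); lra.
have Hh4 : Rabs h < d4 by have := Rmin_r d2 d4; have := Rmin_r d1 (Rmin d2 d4); lra.
set w := Psi s Phi t h.
set a := Phi t j; set b := Phi (t + h) j.
have Ew : Psi (j :: s) Phi t h = setc w j b.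
  apply: functional_extensionality => i; rewrite /w /Psi /setc in_cons.
  by case: eqP => [->|_] //=.
have Ewa : w = setc w j a.
  apply: functional_extensionality => i; rewrite /w /Psi /setc.
  by case: eqP => [->|_] //=; rewrite (negbTE js).
have Hw : forall i, Rabs (w i - z0 i) < d3.
  move=> i; rewrite /w /Psi; case: (i \in s); first exact: H4.
  by rewrite Rminus_diag Rabs_R0.
have Ha : Rabs (a - z0 j) < d3 by rewrite /a Rminus_diag Rabs_R0.
have Hb : Rabs (b - z0 j) < d3 by exact: H4.
have K3 := H3 w a b Hw Ha Hb.
have K1 := H1 h h0 Hh1.
have K2 := H2 h h0 Hh2.
rewrite -/(Psi s Phi t h) -/w in K1.
rewrite big_cons Ew.
rewrite -/z0 -/Dz -/P' in K2 K1 *.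
move: K2 K3; rewrite -Ewa -/a -/b => K2 K3.
set X := F w - F z0; set Y := F (setc w j b) - F w.
set L := \big[Rplus/0]_(i <- s) (D1 i z0 * Phi' i).
set q := (b - a) / h.
have E : (F (setc w j b) - F z0) / h - (Dz * P' + L) =
   (X / h - L) + (Y - (b - a) * Dz) / h + (q - P') * Dz.
  rewrite /X /Y /q; field; exact h0.
rewrite E.
have Hq : Rabs (q - P') < r by [].
have Hr1 : r <= 1 by apply: Rmin_l.
have Hr2 : r <= eps / (4 * (Rabs Dz + 1)) by apply: Rmin_r.
have T1 : Rabs ((Y - (b - a) * Dz) / h) <= e * Rabs q.
  rewrite /q /Rdiv !Rabs_mult Rabs_inv.
  have hp : 0 < Rabs h by apply: Rabs_pos_lt.
  rewrite -Rmult_assoc; apply Rmult_le_compat_r.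
    by left; apply: Rinv_0_lt_compat.
  by rewrite /Y.
have Tq : Rabs q <= Rabs P' + 1.
  have := Rabs_triang_inv q P'; lra.
have T2 : e * Rabs q <= eps / 4.
  have -> : eps / 4 = e * (Rabs P' + 1) by rewrite /e; field; lra.
  apply: Rmult_le_compat_l; lra.
have T3 : Rabs ((q - P') * Dz) <= eps / 4.
  rewrite Rabs_mult.
  have : r * Rabs Dz <= eps / 4.
    have -> : eps / 4 = eps / (4 * (Rabs Dz + 1)) * (Rabs Dz + 1) by field; lra.
    have := Rabs_pos Dz; have : 0 < eps / (4 * (Rabs Dz + 1)) by apply: Rdiv_lt_0_compat; lra.
    nra.
  have := Rabs_pos Dz; have := Rabs_pos (q - P'); nra.
have := Rabs_triang (X / h - L + (Y - (b - a) * Dz) / h) ((q - P') * Dz).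
have := Rabs_triang (X / h - L) ((Y - (b - a) * Dz) / h).
have K1' : Rabs (X / h - L) < eps / 2 by exact: K1.
lra.
Qed.

Lemma chain (I : finType) (F : (I -> R) -> R) (D1 : I -> (I -> R) -> R)
  (Hp : forall j z, partial_lim F j z (D1 j z)) (Hc : forall j, contF (D1 j))
  (Phi : R -> I -> R) (t : R) (Phi' : I -> R)
  (Hd : forall i, derivable_pt_lim (fun s => Phi s i) t (Phi' i)) :
  derivable_pt_lim (fun s => F (Phi s)) t (\big[Rplus/0]_(i : I) (D1 i (Phi t) * Phi' i)).
Proof.
move=> eps Heps.
have [d [Hd0 H]] := chain_seq Hp Hc Hd (index_enum_uniq I) Heps.
exists (mkposreal d Hd0) => h h0 hh.
have := H h h0 hh.
have -> // : Psi (index_enum I) Phi t h = Phi (t + h).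
by apply: functional_extensionality => i; rewrite /Psi mem_index_enum.
Qed.

Definition catv n (x y : vec n) : 'I_n + 'I_n -> R :=
  fun k => match k with inl i => x i | inr i => y i end.

Lemma upd_catl n (x y : vec n) i s :
  (fun k => upd (catv x y) (inl i) s (inl k)) = upd x i s.
Proof. by apply: functional_extensionality => k; rewrite /upd /catv. Qed.
Lemma upd_catr n (x y : vec n) i s :
  (fun k => upd (catv x y) (inr i) s (inr k)) = upd y i s.
Proof. by apply: functional_extensionality => k; rewrite /upd /catv. Qed.

Lemma decay n (f : vec n -> vec n) (V : vec n -> vec n -> R) alo ahi kap
  (HV : dGAS_Lyapunov f V alo ahi kap) (xf : R -> vec n -> vec n)
  (Hs : forall x, is_solution f x (fun t => xf t x)) x y t (Ht : 0 <= t) :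
  V (xf t x) (xf t y) <= exp (- kap * t) * V x y.
Proof.
have [[D [D0 [Dc Dp]]] [Vpos [_ [_ [Hk [_ Hder]]]]]] := HV.
have [x0 [xc xd]] := Hs x; have [y0 [yc yd]] := Hs y.
simpl in x0, y0.
set Phi := fun s => catv (xf s x) (xf s y).
set W := fun s => V (xf s x) (xf s y).
have EW : forall s, W s = D [::] (Phi s) by move=> s; rewrite D0.
set L := fun s => \big[Rplus/0]_(k : 'I_n + 'I_n)
   (D [:: k] (Phi s) * catv (f (xf s x)) (f (xf s y)) k).
have Wd : forall s, 0 < s -> derivable_pt_lim W s (L s).
  move=> s Hs0.
  have -> : W = fun s => D [::] (Phi s) by apply: functional_extensionality.
  apply: (@chain _ (D [::]) (fun k => D [:: k])) => //.
  by case=> i; [apply: xd | apply: yd].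
have Lneg : forall s, 0 < s -> L s <= - kap * W s.
  move=> s Hs0; have [dVx [dVy [Hx [Hy Hsum]]]] := Hder (xf s x) (xf s y).
  rewrite /L sum_sumType.
  have Ex : forall i, D [:: inl i] (Phi s) = dVx i.
    move=> i; apply: (uniqueness_limite (fun t => V (upd (xf s x) i t) (xf s y)) 0) => //.
    have := Dp [::] (inl i) (Phi s); rewrite /partial_lim D0 /Vcat.
    rewrite /Phi => H.
    suff -> : (fun t0 => V (upd (xf s x) i t0) (xf s y)) = (fun t0 => V (fun i0 => upd (catv (xf s x) (xf s y)) (inl i) t0 (inl i0)) (fun i0 => upd (catv (xf s x) (xf s y)) (inl i) t0 (inr i0))) by [].
    apply: functional_extensionality => t0; congr V; apply: functional_extensionality => k;
    by rewrite /upd /catv.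
  have Ey : forall i, D [:: inr i] (Phi s) = dVy i.
    move=> i; apply: (uniqueness_limite (fun t => V (xf s x) (upd (xf s y) i t)) 0) => //.
    have := Dp [::] (inr i) (Phi s); rewrite /partial_lim D0 /Vcat.
    rewrite /Phi => H.
    suff -> : (fun t0 => V (xf s x) (upd (xf s y) i t0)) = (fun t0 => V (fun i0 => upd (catv (xf s x) (xf s y)) (inr i) t0 (inl i0)) (fun i0 => upd (catv (xf s x) (xf s y)) (inr i) t0 (inr i0))) by [].
    apply: functional_extensionality => t0; congr V; apply: functional_extensionality => k;
    by rewrite /upd /catv.
  under eq_bigr do rewrite Ex.
  under [X in _ + X]eq_bigr do rewrite Ey.
  exact: Hsum.
have Ud : forall c, 0 < c -> derivable_pt_lim (fun u => exp (kap * u) * W u) c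
    (exp (kap * c) * kap * W c + exp (kap * c) * L c).
  move=> c Hc.
  have H1 : derivable_pt_lim (fun u => kap * u) c kap.
    have := derivable_pt_lim_scal id kap c 1 (derivable_pt_lim_id c).
    by rewrite Rmult_1_r.
  have H2 := derivable_pt_lim_comp _ _ _ _ _ H1 (derivable_pt_lim_exp (kap * c)).
  exact: (derivable_pt_lim_mult (fun u => exp (kap * u)) W c _ _ H2 (Wd c Hc)).
set U := fun u => exp (kap * u) * W u.
have Umono : forall a b, 0 < a -> a < b -> U b <= U a.
  move=> a b Ha Hab.
  have [c [E Hc]] := MVT_cor2 U (fun c => exp (kap * c) * kap * W c + exp (kap * c) * L c) a b Hab
    (fun c Hc => Ud c ltac:(lra)).
  have Q : exp (kap * c) * kap * W c + exp (kap * c) * L c <= 0.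
    have := Lneg c ltac:(lra); have := exp_pos (kap * c).
    move=> H1 H2.
    have -> : exp (kap * c) * kap * W c + exp (kap * c) * L c = exp (kap * c) * (L c - - kap * W c) by ring.
    nra.
  have : (exp (kap * c) * kap * W c + exp (kap * c) * L c) * (b - a) <= 0.
    nra.
  lra.
have W0 : W 0 = V x y by rewrite /W x0 y0.
have Vxy := Vpos x y.
case: (Rle_lt_or_eq_dec 0 t Ht) => [Htp|<-]; last first.
  by rewrite Rmult_0_r exp_0 Rmult_1_l -/(W 0) W0; lra.
have UW : U t <= V x y.
  apply: Rle_plus_epsilon => e He.
  set e' := Rmin 1 (e / (2 + V x y)).
  have He' : 0 < e' by apply: Rmin_pos; [lra| apply: Rdiv_lt_0_compat; lra].
  have He'1 : e' <= 1 by apply: Rmin_l.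
  have He'2 : e' * (2 + V x y) <= e.
    have := Rmin_r 1 (e / (2 + V x y)); rewrite -/e' => H.
    have -> : e = e / (2 + V x y) * (2 + V x y) by field; lra.
    apply: Rmult_le_compat_r; lra.
  have [d3 [Hd3 H3]] := Dc [::] (Phi 0) e' He'.
  have [d4 [Hd4 H4]] := @fin_delta _ (fun k d => forall s, 0 <= s -> s < d -> Rabs (Phi s k - Phi 0 k) < d3)
    (fun k => match k with inl i => xc i d3 Hd3 | inr i => yc i d3 Hd3 end)
    (fun k d d' Hdd P s H0 Hs' => P s H0 ltac:(lra)).
  have [d5 [Hd5 H5]] := deriv_cont (derivable_pt_lim_exp 0) He'.
  set s := Rmin t (Rmin d4 (d5 / kap)) / 2.
  have Hd5k : 0 < d5 / kap by apply: Rdiv_lt_0_compat.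
  have Hm : 0 < Rmin t (Rmin d4 (d5 / kap)) by apply: Rmin_pos => //; apply: Rmin_pos.
  have Hs0 : 0 < s by rewrite /s; lra.
  have Hst : s < t by have := Rmin_l t (Rmin d4 (d5 / kap)); rewrite /s; lra.
  have Hs4 : s < d4 by have := Rmin_r t (Rmin d4 (d5 / kap)); have := Rmin_l d4 (d5 / kap); rewrite /s; lra.
  have Hs5 : s < d5 / kap by have := Rmin_r t (Rmin d4 (d5 / kap)); have := Rmin_r d4 (d5 / kap); rewrite /s; lra.
  have HWs : W s <= V x y + e'.
    rewrite EW -W0 EW; have := H3 (Phi s) (fun k => H4 k s ltac:(lra) Hs4).
    move/Rabs_def2; lra.
  have Hexp : exp (kap * s) <= 1 + e'.
    have Hks : Rabs (kap * s) < d5.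
      rewrite Rabs_right; last nra.
      have := Rmult_lt_compat_l kap _ _ Hk Hs5.
      have -> : kap * (d5 / kap) = d5 by field; lra.
      done.
    have := H5 _ Hks; rewrite Rplus_0_l exp_0 => /Rabs_def2; lra.
  have := Umono s t Hs0 Hst; rewrite /U.
  have := Vpos (xf s x) (xf s y); rewrite -/(W s) => ? ?.
  have := exp_pos (kap * s); nra.
have E1 : exp (- kap * t) * exp (kap * t) = 1.
  rewrite -exp_plus.
  have -> : - kap * t + kap * t = 0 by ring.
  by rewrite exp_0.
have := exp_pos (- kap * t); move: UW; rewrite /U -/(W t) => UW He.
have -> : W t = exp (- kap * t) * (exp (kap * t) * W t) by rewrite -Rmult_assoc E1 Rmult_1_l.
by apply: Rmult_le_compat_l; lra.
Qed.

Lemma bigmax_ge (T : eqType) (F : T -> R) x0 (l : seq T) p :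
  p \in l -> F p <= \big[Rmax/x0]_(i <- l) F i.
Proof.
elim: l => [|a l IH] //; rewrite in_cons big_cons => /orP [/eqP ->|H].
  exact: Rmax_l.
apply: Rle_trans (IH H) _; exact: Rmax_r.
Qed.

Lemma bigmin_le (T : eqType) (F : T -> R) x0 (l : seq T) p :
  p \in l -> \big[Rmin/x0]_(i <- l) F i <= F p.
Proof.
elim: l => [|a l IH] //; rewrite in_cons big_cons => /orP [/eqP ->|H].
  exact: Rmin_l.
apply: Rle_trans _ (IH H); exact: Rmin_r.
Qed.

Lemma fmax_ge (T : finType) (g : T -> R) p : g p <= fmax g.
Proof.
rewrite /fmax; case E: (enum T) => [|p0 l].
  by have := mem_enum T p; rewrite E in_nil.
apply: bigmax_ge; exact: mem_index_enum.
Qed.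

Lemma fmax_le (T : finType) (g : T -> R) b (p : T) : (forall p, g p <= b) -> fmax g <= b.
Proof.
move=> H; rewrite /fmax; case E: (enum T) => [|p0 l].
  by have := mem_enum T p; rewrite E in_nil.
apply: (big_ind (fun v => v <= b)) => // *; exact: Rmax_lub.
Qed.

Lemma fmin_le (T : finType) (g : T -> R) p : fmin g <= g p.
Proof.
rewrite /fmin; case E: (enum T) => [|p0 l].
  by have := mem_enum T p; rewrite E in_nil.
apply: bigmin_le; exact: mem_index_enum.
Qed.

Lemma fmin_gt (T : finType) (g : T -> R) b (p : T) : (forall p, b < g p) -> b < fmin g.
Proof.
move=> H; rewrite /fmin; case E: (enum T) => [|p0 l].
  by have := mem_enum T p; rewrite E in_nil.
apply: (big_ind (fun v => b < v)) => // *; exact: Rmin_glb_lt.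
Qed.

Definition contR (a : R -> R) := forall r, 0 <= r -> forall e, 0 < e -> exists d, 0 < d /\
      forall s, 0 <= s -> Rabs (s - r) < d -> Rabs (a s - a r) < e.

Lemma Kinv_spec (a : R -> R) (y : R) : a 0 = 0 -> contR a ->
  (forall M, exists r, 0 <= r /\ M < a r) -> 0 < y ->
  0 <= Kinv a y /\ a (Kinv a y) = y.
Proof.
move=> a0 ac au yp.
suff [r Hr] : exists r, 0 <= r /\ a r = y.
  by apply: (epsilon_spec (inhabits 0) (fun r => 0 <= r /\ a r = y)); exists r.
have [r1 [Hr1 Hy]] := au y.
have r1p : 0 < r1.
  case: (Rle_lt_or_eq_dec 0 r1 Hr1) => // E; rewrite -E a0 in Hy; lra.
set h := fun s => a (Rabs s) - y.
have hc : continuity h.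
  move=> s; unfold continuity_pt, continue_in, limit1_in, limit_in; simpl.
  move=> e He; have [d [Hd H]] := ac (Rabs s) (Rabs_pos s) e He.
  exists d; split => // z [_ Hz]; rewrite /R_dist in Hz *; rewrite /h.
  have -> : a (Rabs z) - y - (a (Rabs s) - y) = a (Rabs z) - a (Rabs s) by ring.
  apply: H; first exact: Rabs_pos.
  exact: Rle_lt_trans (Rabs_triang_inv2 z s) Hz.
have [z [Hz E]] := IVT h 0 r1 hc r1p ltac:(rewrite /h Rabs_R0 a0; lra)
   ltac:(rewrite /h Rabs_right; lra).
exists z; split; first lra.
move: E; rewrite /h Rabs_right; lra.
Qed.

Lemma fmax_contR (T : finType) (G : T -> R -> R) (p0 : T) :
  (forall p, contR (G p)) -> contR (fun r => fmax (fun p => G p r)).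
Proof.
move=> Hc r Hr e He.
have [d [Hd H]] := @fin_delta T (fun p d => forall s, 0 <= s -> Rabs (s - r) < d -> Rabs (G p s - G p r) < e / 2)
  (fun p => Hc p r Hr (e / 2) ltac:(lra)) (fun p d d' Hdd P s H0 Hs => P s H0 ltac:(lra)).
exists d; split => // s Hs Hsr.
have A : fmax (fun p => G p s) <= fmax (fun p => G p r) + e / 2.
  apply: (fmax_le p0) => p; have := H p s Hs Hsr; move/Rabs_def2 => [? ?].
  have := fmax_ge (fun p => G p r) p; lra.
have B : fmax (fun p => G p r) <= fmax (fun p => G p s) + e / 2.
  apply: (fmax_le p0) => p; have := H p s Hs Hsr; move/Rabs_def2 => [? ?].
  have := fmax_ge (fun p => G p s) p; lra.
apply: Rabs_def1; lra.
Qed.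

Lemma Kinf_contR a : Kinf a -> contR a.
Proof. by case=> _ [H _]. Qed.

Lemma Kinf_mono a : Kinf a -> forall r s, 0 <= r -> r <= s -> a r <= a s.
Proof.
case=> _ [_ [H _]] r s Hr Hrs.
case: (Rle_lt_or_eq_dec r s Hrs) => [/H|->]; [move=> /(_ Hr); lra| lra].
Qed.

Lemma fmax_Kinv_le (T : finType) (G : T -> R -> R) (p0 : T) (HK : forall p, Kinf (G p))
  (y r : R) : 0 < y -> 0 <= r -> r <= Kinv (fun r => fmax (fun p => G p r)) y ->
  forall p, G p r <= y.
Proof.
move=> yp Hr Hle p.
have [H1 H2] := @Kinv_spec (fun r => fmax (fun p => G p r)) y
  ltac:(apply: Rle_antisym; [apply: (fmax_le p0) => q; case: (HK q) => -> _; lra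
         | have := fmax_ge (fun p => G p 0) p0; case: (HK p0) => -> _; done])
  (fmax_contR p0 (fun p => Kinf_contR (HK p)))
  ltac:(move=> M; have [_ [_ [_ HM]]] := HK p0; have [r1 [? ?]] := HM M;
        exists r1; split => //; have := fmax_ge (fun p => G p r1) p0; lra) yp.
apply: Rle_trans (fmax_ge (fun p => G p r) p) _.
rewrite -H2; apply: (fmax_le p0) => q.
apply: Rle_trans (fmax_ge (fun p => G p _) q).
exact: (Kinf_mono (HK q)).
Qed.

Lemma edist_pos n (x y : vec n) : 0 <= edist x y.
Proof. exact: sqrt_pos. Qed.

Lemma edist_sym n (x y : vec n) : edist x y = edist y x.
Proof.
rewrite /edist /enorm /vsub; congr sqrt; apply: eq_bigr => i _; ring.
Qed.

Lemma edist_self n (x : vec n) : edist x x = 0.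
Proof.
rewrite /edist /enorm /vsub big1 ?sqrt_0 // => i _; ring.
Qed.

Lemma sum_le_const n (F : 'I_n -> R) K : (forall i, F i <= K) ->
  \big[Rplus/0]_(i < n) F i <= INR n * K.
Proof.
move=> H.
have : \big[Rplus/0]_(i < n) F i <= \big[Rplus/0]_(i < n) K.
  apply: (big_ind2 (fun a b => a <= b)) => //; [lra| move=> *; lra].
rewrite big_const_ord; suff -> : iter n (Rplus K) 0 = INR n * K by [].
elim: n {F H} => [|k IH] /=; first ring.
by rewrite IH; case: k {IH} => [|k] /=; ring.
Qed.

Lemma lattice_near n eta (Heta : 0 < eta) (x : vec n) :
  exists q : vec n, in_lattice eta q /\ edist x q <= eta.
Proof.
case: n x => [|n] x.
  exists x; split; last by rewrite edist_self; lra.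
  by case.
set s := 2 * eta / sqrt (INR n.+1).
have Hn : 0 < INR n.+1 by apply: lt_0_INR; apply/ltP.
have Hsq : 0 < sqrt (INR n.+1) by apply: sqrt_lt_R0.
have Hs : 0 < s by rewrite /s; apply: Rdiv_lt_0_compat; lra.
set k := fun i => (up (x i / s + / 2) - 1)%Z.
exists (fun i => IZR (k i) * s); split.
  by move=> i; exists (k i).
have Hterm : forall i, vsub x (fun i => IZR (k i) * s) i * vsub x (fun i => IZR (k i) * s) i <= eta * eta / INR n.+1.
  move=> i; rewrite /vsub /k minus_IZR.
  set u := IZR (up (x i / s + / 2)).
  have [A1 A2] : u > x i / s + / 2 /\ u - (x i / s + / 2) <= 1 := archimed _.
  have E : x i - (u - 1) * s = s * (x i / s - (u - 1)) by field; lra.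
  rewrite E.
  have B : (x i / s - (u - 1)) * (x i / s - (u - 1)) <= / 4.
    have : - / 2 <= x i / s - (u - 1) <= / 2 by lra.
    nra.
  have S2 : s * s = 4 * (eta * eta / INR n.+1).
    have Q := sqrt_sqrt (INR n.+1) ltac:(lra).
    rewrite /s.
    have -> : 2 * eta / sqrt (INR n.+1) * (2 * eta / sqrt (INR n.+1)) = 4 * (eta * eta) / (sqrt (INR n.+1) * sqrt (INR n.+1)) by field; lra.
    rewrite Q; field; lra.
  have := Rmult_le_compat_l (s * s) _ _ ltac:(nra) B.
  rewrite S2; nra.
have := sum_le_const Hterm.
have -> : INR n.+1 * (eta * eta / INR n.+1) = eta * eta by field; lra.
move=> Hsum; rewrite /edist /enorm.
rewrite -(sqrt_Rsqr eta); last lra.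
by apply: sqrt_le_1_alt; rewrite /Rsqr.
Qed.

Lemma Vpos_of n (f : vec n -> vec n) (V : vec n -> vec n -> R) alo ahi kap :
  dGAS_Lyapunov f V alo ahi kap -> forall x y, 0 <= V x y.
Proof. by case=> _ [H _]. Qed.

Lemma exp_nat N x : exp (INR N * x) = exp x ^ N.
Proof.
elim: N => [|N IH]; first by rewrite /= Rmult_0_l exp_0.
by rewrite S_INR Rmult_plus_distr_r Rmult_1_l exp_plus IH /=; ring.
Qed.

Unset Implicit Arguments.

Theorem theorem6
  (n m : nat)
  (f : 'I_m -> vec n -> vec n)
  (xflow : 'I_m -> R -> vec n -> vec n)
  (Hlip : forall p, locally_lipschitz (f p))
  (Hflow : forall p x, is_solution (f p) x (fun t => xflow p t x))
  (V : 'I_m -> vec n -> vec n -> R)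
  (alo ahi : 'I_m -> R -> R) (kap : 'I_m -> R)
  (HV : forall p, dGAS_Lyapunov (f p) (V p) (alo p) (ahi p) (kap p))
  (mu : R) (Hmu1 : 1 <= mu)
  (Hmu : forall p p' x y, V p x y <= mu * V p' x y)
  (gam : 'I_m -> R -> R)
  (Hgam : forall p, Kinf (gam p))
  (HVgam : forall p x y z, Rabs (V p x y - V p x z) <= gam p (edist y z))
  (tau_s eta eps : R) (N : nat)
  (Hts : 0 < tau_s) (Heta : 0 < eta) (Heps : 0 < eps) (HN : (0 < N)%nat)
  (tau_d : R) (Htd : tau_d = INR N * tau_s)
  (Hdwell : tau_d > ln mu / fmin kap)
  (Heta_bound :
     let alo_min := fun r => fmin (fun p => alo p r) in
     let ahi_max := fun r => fmax (fun p => ahi p r) in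
     let gam_max := fun r => fmax (fun p => gam p r) in
     let k := fmin kap in
     eta <= Rmin
       (Kinv gam_max ((1 / mu - exp (- k * tau_d)) / (1 - exp (- k * tau_d))
                       * (1 - exp (- k * tau_s)) * alo_min eps))
       (Kinv ahi_max (alo_min eps))) :
  approx_bisimilar (@edist n) (T_exact N xflow tau_s) (T_abs N xflow tau_s eta) eps.
Proof.
case: (classic (inhabited 'I_m)) => [[p0]|Hno]; last first.
  exists (fun _ _ => False); split; first by [].
  by split => q _; exfalso; apply: Hno; constructor; exact: q.1.2.
move: Heta_bound; cbv zeta => Heta_bound.
set k := fmin kap in Hdwell Heta_bound.
have Hkp : forall p, 0 < kap p by move=> p; have [_ [_ [_ [_ [H _]]]]] := HV p.
have Hk : 0 < k by apply: (fmin_gt p0).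
have Hkle : forall p, k <= kap p by move=> p; apply: fmin_le.
set A := fmin (fun p => alo p eps) in Heta_bound.
have HA : 0 < A.
  apply: (fmin_gt p0) => p; have [_ [_ [Ha _]]] := HV p.
  have [a0 [_ [Hs _]]] := Ha; rewrite -a0; apply: Hs => //; lra.
have HAle : forall p, A <= alo p eps by move=> p; apply: fmin_le.
set a := exp (- k * tau_s) in Heta_bound.
have Ha0 : 0 < a by apply: exp_pos.
have Ha1 : a < 1 by rewrite /a -exp_0; apply: exp_increasing; nra.
have EaN : exp (- k * tau_d) = a ^ N.
  by rewrite /a -exp_nat Htd; congr exp; ring.
rewrite EaN in Heta_bound.
have HaN : a ^ N < 1 / mu.
  rewrite -EaN.
  have : k * tau_d > ln mu.
    have := Rmult_lt_compat_l k _ _ Hk Hdwell.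
    have -> : k * (ln mu / k) = ln mu by field; lra.
    lra.
  move=> H; have -> : 1 / mu = exp (- ln mu).
    by rewrite exp_Ropp exp_ln; [rewrite /Rdiv Rmult_1_l| lra].
  apply: exp_increasing; lra.
have HaN0 : 0 < a ^ N by apply: pow_lt.
have Hmu0 : 0 < 1 / mu by apply: Rdiv_lt_0_compat; lra.
have Hmu1' : 1 / mu <= 1.
  apply: (Rmult_le_reg_l mu); [lra|]; rewrite /Rdiv Rmult_1_l Rinv_r; lra.
set c := (1 / mu - a ^ N) / (1 - a ^ N) * (1 - a) * A in Heta_bound.
have HaN1 : a ^ N < 1 by lra.
have Hc : 0 < c.
  rewrite /c; apply: Rmult_lt_0_compat => //; apply: Rmult_lt_0_compat; last lra.
  apply: Rdiv_lt_0_compat; lra.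
have Hc1 : c <= (1 - a) * A.
  rewrite /c; apply: Rmult_le_compat_r; first lra.
  have : (1 / mu - a ^ N) / (1 - a ^ N) <= 1.
    apply: (Rmult_le_reg_r (1 - a ^ N)); first lra.
    rewrite /Rdiv Rmult_assoc Rinv_l; lra.
  move=> H; have : 0 < 1 - a by lra.
  nra.
have Hgam_eta : forall p, gam p eta <= c.
  apply: (fmax_Kinv_le p0) => //; first lra.
  apply: Rle_trans Heta_bound _; exact: Rmin_l.
have Hahi_eta : forall p, ahi p eta <= A.
  apply: (fmax_Kinv_le p0).
  - by move=> p; have [_ [_ [_ [H _]]]] := HV p.
  - exact: HA.
  - lra.
  - apply: Rle_trans Heta_bound _; exact: Rmin_r.
set B := fun j : nat => a ^ j * A + c * (1 - a ^ j) / (1 - a).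
have Hpow : forall j, 0 < a ^ j <= 1.
  move=> j; split; first exact: pow_lt.
  rewrite -(pow1 j); apply: pow_incr; lra.
have FB1 : forall j, B j <= A.
  move=> j; have [? ?] := Hpow j; rewrite /B.
  have : c / (1 - a) <= A.
    apply: (Rmult_le_reg_r (1 - a)); first lra.
    rewrite /Rdiv Rmult_assoc Rinv_l; lra.
  move=> H.
  have -> : a ^ j * A + c * (1 - a ^ j) / (1 - a) = A - (1 - a ^ j) * (A - c / (1 - a)) by field; lra.
  nra.
have FB2 : forall j, a * B j + c = B j.+1.
  by move=> j; rewrite /B /=; field; lra.
have FB3 : B N <= B (N - 1)%nat.
  have [M EM] : exists M, N = M.+1 by case: N HN {Htd EaN HaN HaN0 c Heta_bound Hc Hc1 Hgam_eta HaN1 B FB1 FB2} => // M _; exists M.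
  have [? ?] := Hpow M.
  rewrite EM subn1 /=.
  suff : B M.+1 - B M <= 0 by lra.
  rewrite /B /=.
  have -> : a * a ^ M * A + c * (1 - a * a ^ M) / (1 - a) - (a ^ M * A + c * (1 - a ^ M) / (1 - a))
     = a ^ M * (c - (1 - a) * A) by field; lra.
  nra.
have FB4 : mu * B N <= A.
  have -> : B N = A / mu.
    rewrite /B /c; field; split; lra.
  have -> : mu * (A / mu) = A by field; lra.
  lra.
have FB0 : B 0%nat = A by rewrite /B /=; field; lra.
have Step : forall p x q q' j, V p x q <= B j -> edist (xflow p tau_s q) q' <= eta ->
    V p (xflow p tau_s x) q' <= B j.+1.
  move=> p x q q' j HB Hd.
  have H1 := HVgam p (xflow p tau_s x) q' (xflow p tau_s q).
  rewrite edist_sym in H1.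
  have H2 : gam p (edist (xflow p tau_s q) q') <= c.
    apply: Rle_trans (Hgam_eta p).
    apply: (Kinf_mono (Hgam p)) => //; exact: edist_pos.
  have H3 := decay (HV p) (Hflow p) x q (Rlt_le _ _ Hts).
  have H4 : exp (- kap p * tau_s) <= a.
    rewrite /a; have := Hkle p => Hkp'.
    case: (Rle_lt_or_eq_dec _ _ Hkp') => [Hlt|->]; last lra.
    left; apply: exp_increasing; nra.
  have H5 := Vpos_of (HV p) x q.
  rewrite -FB2; have H6 := Rle_abs (V p (xflow p tau_s x) q' - V p (xflow p tau_s x) (xflow p tau_s q)).
  have : exp (- kap p * tau_s) * V p x q <= a * B j.
    apply Rmult_le_compat; [left; apply: exp_pos| exact H5| exact H4| exact HB].
  lra.
have Hbnd : forall p x y, alo p (edist x y) <= V p x y /\ V p x y <= ahi p (edist x y).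
  by move=> p; have [_ [_ [_ [_ [_ [Hb _]]]]]] := HV p.
have Mode : forall (p p' : 'I_m) (i i' : 'I_N) x q, mode_step p i p' i' ->
    V p x q <= B (nat_of_ord i).+1 -> V p' x q <= B (nat_of_ord i').
  move=> p p' i i' x q [[_ [-> ->]]|[[E [-> ->]]|[E [Hne ->]]]] H.
  - by rewrite addn1.
  - rewrite E in H; apply: Rle_trans FB3.
    by move: H; rewrite subn1 prednK.
  - rewrite FB0; rewrite E subn1 prednK // in H.
    have := Hmu p' p x q; have : mu * V p x q <= mu * B N.
      apply: Rmult_le_compat_l; lra.
    lra.
have Dist : forall p x q j, V p x q <= B j -> edist x q <= eps.
  move=> p x q j HB; case: (Rle_lt_dec (edist x q) eps) => // Hlt.
  have [_ [_ [Ha _]]] := HV p; have [_ [_ [Hs _]]] := Ha.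
  have := Hs eps (edist x q) ltac:(lra) Hlt.
  have := Hbnd p x q; have := FB1 j; have := HAle p; lra.
have Init : forall p x q, edist x q <= eta -> V p x q <= B 0%nat.
  move=> p x q Hd; rewrite FB0; apply: Rle_trans (Hahi_eta p).
  apply: Rle_trans (proj2 (Hbnd p x q)) _.
  have [_ [_ [_ [Hh _]]]] := HV p.
  apply: (Kinf_mono Hh) => //; exact: edist_pos.
exists (fun (q1 : vec n * 'I_m * 'I_N) (q2 : {q : vec n | in_lattice eta q} * 'I_m * 'I_N) =>
  q2.1.2 = q1.1.2 /\ q2.2 = q1.2 /\ V q1.1.2 q1.1.1 (proj1_sig q2.1.1) <= B q1.2).
split; [|split].
- move=> [[x p] i] [[qq p2] i2] /= [-> [-> HB]]; split; first exact: Dist HB.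
  split.
  + move=> l [[x' p'] i'] /= [-> [-> Hms]].
    have [qv [Hl Hd]] := lattice_near Heta (xflow p tau_s (proj1_sig qq)).
    exists ((exist _ qv Hl, p'), i') => /=; split; first by split.
    do 2!split => //; exact: Mode Hms (Step _ _ _ _ _ HB Hd).
  + move=> l [[qv' p'] i'] /= [-> [Hd Hms]].
    exists ((xflow p tau_s x, p'), i') => /=; split; first by split.
    do 2!split => //; exact: Mode Hms (Step _ _ _ _ _ HB Hd).
- move=> [[x p] i] /= Hi.
  have [qv [Hl Hd]] := lattice_near Heta x.
  exists ((exist _ qv Hl, p), i) => /=; split => //; do 2!split => //.
  rewrite Hi; exact: Init.
- move=> [[qq p] i] /= Hi.
  exists ((proj1_sig qq, p), i) => /=; split => //; do 2!split => //.
  rewrite Hi; apply: Init; rewrite edist_self; lra.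
Qed.
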